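(* Let $h>0$. Apart from equilibrium points, the flow $(\dagger)$ restricted to the infinity manifold $N_h$ has no closed orbits and no recurrent orbits.
   Context: Let $\Theta(s)=1-s^2$, and let $\lambda\in(0,\pi/4)$ be a constant depending only on the masses. The infinity manifold is $N_h=\{(\tilde v,\tilde s,\tilde u)\in\mathbb R\times[-1,1]\times\mathbb R:\tfrac12(\tilde u^2+\tilde v^2)=h\}$. It is the invariant subset $\{\tilde R=0\}$ of the positive-energy regularized flow $(\dagger)$ of the collinear three-body problem with Hamiltonian $$\tfrac12\mathbf p^TM^{-1}\mathbf p-\sum_{i<j}\alpha_{ij}|q_i-q_j|^{-a}+\sum_{i<j}\beta_{ij}|q_i-q_j|^{-b},$$ where $m_i,\alpha_{ij},\beta_{ij}>0$ and $4<a<b-1$. On $N_h$ the flow is $$\tilde v'=\Theta(\tilde s)\tilde u^2,\qquad \tilde s'=\tfrac1\lambda\Theta(\tilde s)\tilde u,\qquad \tilde u'=-\Theta(\tilde s)\tilde u\tilde v.$$ *)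

(* Defs.v *)
From Stdlib Require Import Reals.
Open Scope R_scope.

Definition Theta (s : R) : R := 1 - s ^ 2.

(* The vector field of the flow (dagger) on the infinity manifold {R~ = 0},
   in coordinates (v, s, u). *)
Definition fld_v (lam v s u : R) : R := Theta s * u ^ 2.
Definition fld_s (lam v s u : R) : R := / lam * Theta s * u.
Definition fld_u (lam v s u : R) : R := - (Theta s * u * v).

Definition in_N (h v s u : R) : Prop :=
  -1 <= s <= 1 /\ / 2 * (u ^ 2 + v ^ 2) = h.

Definition is_orbit_N (lam h : R) (v s u : R -> R) : Prop :=
  forall t : R,
    in_N h (v t) (s t) (u t) /\
    derivable_pt_lim v t (fld_v lam (v t) (s t) (u t)) /\
    derivable_pt_lim s t (fld_s lam (v t) (s t) (u t)) /\
    derivable_pt_lim u t (fld_u lam (v t) (s t) (u t)).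

Definition is_equilibrium (lam v s u : R) : Prop :=
  fld_v lam v s u = 0 /\ fld_s lam v s u = 0 /\ fld_u lam v s u = 0.

Definition is_closed_orbit (v s u : R -> R) : Prop :=
  exists T : R, 0 < T /\ forall t : R, v (t + T) = v t /\ s (t + T) = s t /\ u (t + T) = u t.

Definition near0 (v s u : R -> R) (t eps : R) : Prop :=
  Rabs (v t - v 0) < eps /\ Rabs (s t - s 0) < eps /\ Rabs (u t - u 0) < eps.

(* Recurrent orbit: the initial point lies in its own omega-limit set
   (positively recurrent) or its own alpha-limit set (negatively recurrent). *)
Definition is_recurrent_orbit (v s u : R -> R) : Prop :=
  (forall eps T : R, 0 < eps -> exists t, T < t /\ near0 v s u t eps) \/
  (forall eps T : R, 0 < eps -> exists t, t < T /\ near0 v s u t eps).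

(* Main.v *)
Require Import Defs.
From Stdlib Require Import Reals Lra ZArith.
Open Scope R_scope.

Lemma local_strict (f : R -> R) (l : R) :
  derivable_pt_lim f 0 l -> 0 < l ->
  exists d, 0 < d /\ f (-d) < f 0 /\ f 0 < f d.
Proof.
  intros H Hl.
  destruct (H (l/2) ltac:(lra)) as [[del Hd] Hdel]. simpl in Hdel.
  exists (del/2). split; [lra|].
  assert (A1 := Hdel (del/2) ltac:(lra) ltac:(rewrite Rabs_right; lra)).
  assert (A2 := Hdel (-(del/2)) ltac:(lra) ltac:(rewrite Rabs_left; lra)).
  rewrite Rplus_0_l in A1, A2.
  apply Rabs_def2 in A1. apply Rabs_def2 in A2. destruct A1 as [_ A1], A2 as [_ A2].
  split.
  - assert (0 < (f (-(del/2)) - f 0) / (-(del/2)) ) by lra.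
    assert (0 < - (f (-(del/2)) - f 0)).
    { replace (- (f (-(del/2)) - f 0)) with ((f (-(del/2)) - f 0) / (-(del/2)) * (del/2))
        by (field; lra). apply Rmult_lt_0_compat; lra. }
    lra.
  - assert (0 < (f (del/2) - f 0) / (del/2)) by lra.
    assert (0 < f (del/2) - f 0).
    { replace (f (del/2) - f 0) with ((f (del/2) - f 0) / (del/2) * (del/2))
        by (field; lra). apply Rmult_lt_0_compat; lra. }
    lra.
Qed.

Theorem mainTheorem7 :
  forall (lam h : R), 0 < lam < PI / 4 -> 0 < h ->
  forall v s u : R -> R, is_orbit_N lam h v s u ->
    (is_closed_orbit v s u \/ is_recurrent_orbit v s u) ->
    is_equilibrium lam (v 0) (s 0) (u 0).
Proof.
  intros lam h Hlam Hh v s u Horb Hcr.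
  destruct (Req_dec (Theta (s 0) * u 0) 0) as [Z|NZ].
  { unfold is_equilibrium, fld_v, fld_s, fld_u. repeat split.
    - replace (Theta (s 0) * u 0 ^ 2) with ((Theta (s 0) * u 0) * u 0) by ring.
      rewrite Z; ring.
    - replace (/ lam * Theta (s 0) * u 0) with (/lam * (Theta (s 0) * u 0)) by ring.
      rewrite Z; ring.
    - rewrite Z; ring. }
  exfalso.
  assert (Hinc : increasing v).
  { assert (pr : derivable v).
    { intro t. destruct (Horb t) as [_ [Hv _]]. exact (exist _ _ Hv). }
    apply (nonneg_derivative_1 v pr). intro t.
    destruct (Horb t) as [[[Hs1 Hs2] _] [Hv _]].
    rewrite (derive_pt_eq_0 _ _ _ _ Hv). unfold fld_v, Theta.
    apply Rmult_le_pos.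
    - assert (s t ^ 2 <= 1) by nra. lra.
    - nra. }
  assert (Hpos : 0 < fld_v lam (v 0) (s 0) (u 0)).
  { destruct (Horb 0) as [[[Hs1 Hs2] _] _].
    unfold fld_v. unfold Theta in *.
    assert (s 0 ^ 2 <= 1) by nra.
    assert (1 - s 0 ^ 2 <> 0) by (intro E; apply NZ; rewrite E; ring).
    assert (u 0 <> 0) by (intro E; apply NZ; rewrite E; ring).
    apply Rmult_lt_0_compat. lra.
    assert (0 < u 0 * u 0) by (apply Rsqr_pos_lt; auto). simpl; lra. }
  destruct (Horb 0) as [_ [Hv0 _]].
  destruct (local_strict v _ Hv0 Hpos) as [d [Hd [Hm Hp]]].
  destruct Hcr as [[T [HT HP]] | [Hr | Hr]].
  - destruct (HP 0) as [E _]. rewrite Rplus_0_l in E.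
    destruct (Rle_dec d T) as [HdT|HdT].
    + assert (v d <= v T) by (apply Hinc; lra). lra.
    + assert (v T <= v d) by (apply Hinc; lra).
      assert (v 0 <= v T) by (apply Hinc; lra).
      destruct (HP T) as [E2 _].
      assert (Hper : forall n:nat, v (INR n * T) = v 0).
      { induction n. simpl. replace (0 * T) with 0 by ring; auto.
        rewrite S_INR. replace ((INR n + 1) * T) with (INR n * T + T) by ring.
        destruct (HP (INR n * T)) as [E3 _]. rewrite E3; auto. }
      destruct (archimed (d / T)) as [A _].
      assert (Hn : exists n:nat, d <= INR n * T).
      { exists (Z.abs_nat (up (d/T))).
        rewrite INR_IZR_INZ, Zabs2Nat.id_abs, Z.abs_eq.
        - apply Rmult_le_reg_r with (/T). apply Rinv_0_lt_compat; lra.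
          rewrite Rmult_assoc, Rinv_r by lra. rewrite Rmult_1_r. unfold Rdiv in A. lra.
        - apply le_IZR. assert (0 <= d/T). { apply Rlt_le, Rdiv_lt_0_compat; lra. } lra. }
      destruct Hn as [n Hn].
      assert (Hle : v d <= v (INR n * T)) by (apply Hinc; lra).
      rewrite Hper in Hle. lra.
  - destruct (Hr (v d - v 0) d ltac:(lra)) as [t [Ht [Hn _]]].
    assert (v d <= v t) by (apply Hinc; lra).
    rewrite Rabs_right in Hn; lra.
  - destruct (Hr (v 0 - v (-d)) (-d) ltac:(lra)) as [t [Ht [Hn _]]].
    assert (v t <= v (-d)) by (apply Hinc; lra).
    rewrite Rabs_left in Hn; lra.
Qed.
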